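(* For every $n,k,d\in\mathbb{N}$ with $n\ge k\ge d$ there exists $\varepsilon_n(k,d)>0$ such that $$| \tilde{c}(k,d)| - \varepsilon_n(k,d) \leq \inf_{g\in \mathscr{P}_{>k}^n} \|f_d-g\|_1 \leq | \tilde{c}(k,d)|,$$ and $\lim_{n\to\infty}\varepsilon_n(k,d)=0$ for fixed $k,d$.
   Context: $f_d(x)=\sum_{S\subseteq\{1,\dots,n\},|S|=d}\prod_{i\in S}x_i$ is the $d$-th elementary symmetric multilinear polynomial on $\{-1,1\}^n$. Every $g:\{-1,1\}^n\to\mathbb{R}$ has a unique expansion $g=\sum_S\widehat g(S)w_S$ with $w_S(x)=\prod_{i\in S}x_i$, and $\mathscr{P}^n_{>k}=\{g:\ \widehat g(S)=0\text{ whenever }|S|\le k\}$. $\|\cdot\|_1$ is the $L_1$ norm with respect to the uniform probability measure on $\{-1,1\}^n$. Let $T_k(x)=\sum_{\ell=0}^k c(k,\ell)x^\ell$ be the $k$-th Chebyshev polynomial of the first kind, $T_k(\cos\theta)=\cos(k\theta)$. Define $\tilde c(k,\ell)=c(k,\ell)$ if $k-\ell$ is even and $\tilde c(k,\ell)=c(k-1,\ell)$ if $k-\ell$ is odd. *)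

(* Defs.v *)
From HB Require Import structures.
From mathcomp Require Import all_boot all_order all_algebra.
From mathcomp Require Import boolp classical_sets reals topology normedtype sequences.
Set Implicit Arguments. Unset Strict Implicit. Unset Printing Implicit Defensive.
Import Order.TTheory GRing.Theory Num.Theory.
Local Open Scope ring_scope.

(* The hypercube {-1,1}^n: a point is b : {ffun 'I_n -> bool}, with
   coordinate x_i = -1 if b i = true, and 1 otherwise. *)
Definition cube (n : nat) := {ffun 'I_n -> bool}.

Definition coord {R : realType} {n : nat} (b : cube n) (i : 'I_n) : R :=
  if b i then -1 else 1.

Definition walsh {R : realType} {n : nat} (S : {set 'I_n}) (b : cube n) : R :=
  \prod_(i in S) coord b i.

Definition fsym {R : realType} (n d : nat) (b : cube n) : R :=
  \sum_(S : {set 'I_n} | #|S| == d) walsh S b.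

Definition L1norm {R : realType} (n : nat) (h : cube n -> R) : R :=
  (2 ^+ n)^-1 * \sum_(b : cube n) `|h b|.

Definition Pgt {R : realType} (n k : nat) : set (cube n -> R) :=
  [set g | exists a : {set 'I_n} -> R,
      (forall S : {set 'I_n}, (#|S| <= k)%N -> a S = 0) /\
      (forall b, g b = \sum_(S : {set 'I_n}) a S * walsh S b)].

(* Chebyshev polynomials of the first kind: T_0 = 1, T_1 = X,
   T_{k+2} = 2 X T_{k+1} - T_k. *)
Fixpoint cheb_pair {R : realType} (k : nat) : {poly R} * {poly R} :=
  match k with
  | 0%N => (1, 'X)
  | k'.+1 => let: (p, q) := cheb_pair k' in (q, 2%:P * 'X * q - p)
  end.

Definition cheb {R : realType} (k : nat) : {poly R} := (cheb_pair k).1.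

Definition ccoef {R : realType} (k l : nat) : R := (cheb k)`_l.

Definition ctilde {R : realType} (k l : nat) : R :=
  if odd (k - l) then ccoef (k.-1) l else ccoef k l.

Definition distP {R : realType} (n k d : nat) : R :=
  inf [set @L1norm R n (fun b => @fsym R n d b - g b) | g in @Pgt R n k]%classic.

(* Main.v *)
Require Import Defs.
From HB Require Import structures.
From mathcomp Require Import all_boot all_order all_algebra.
From mathcomp Require Import boolp classical_sets reals topology normedtype sequences.
From mathcomp Require Import trigo.
From mathcomp Require Import ring lra.
From mathcomp Require Import zify realfun.
Import Order.TTheory GRing.Theory Num.Theory numFieldNormedType.Exports.
Local Open Scope classical_set_scope.
Local Open Scope ring_scope.
Section Cube.
Variable R : realType.
Variable n : nat.
Implicit Types (b : cube n).

Lemma prod_form (G : 'I_n -> bool -> R) :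
  \sum_(b : cube n) \prod_(l < n) G l (b l) = \prod_(l < n) (G l true + G l false).
Proof.
rewrite -bigA_distr_bigA; apply: eq_bigr => l _; by rewrite big_bool.
Qed.

Definition flip (l : 'I_n) b : cube n := [ffun i => if i == l then ~~ b i else b i].

Lemma flipK l : involutive (flip l).
Proof. move=> b; apply/ffunP => i; rewrite !ffunE; case: eqP => //; by rewrite negbK. Qed.

Lemma coord_flip l b i : @Defs.coord R n (flip l b) i = if i == l then - Defs.coord b i else Defs.coord b i.
Proof. rewrite /Defs.coord ffunE; case: eqP => _ //; case: (b i) => /=; by rewrite ?opprK. Qed.

Lemma sum_flip0 l (G : cube n -> R) : (forall b, G (flip l b) = - G b) -> \sum_b G b = 0.
Proof.
move=> H.
have E : \sum_b G b = \sum_b G (flip l b).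
  by rewrite (reindex_inj (inv_inj (flipK l))).
have : \sum_b G b = - \sum_b G b by rewrite {1}E -sumrN; apply: eq_bigr => b _; rewrite H.
move/eqP; rewrite -addr_eq0 -mulr2n mulrn_eq0 /= => /eqP //.
Qed.

Lemma walsh_flip S l b : @walsh R n S (flip l b) = if l \in S then - walsh S b else walsh S b.
Proof.
rewrite /walsh; case: ifP => lS.
  rewrite (bigD1 l) //= [in RHS](bigD1 l) //= coord_flip eqxx mulNr; congr (- (_ * _)).
  apply: eq_bigr => i /andP [_ /negPf il]; by rewrite coord_flip il.
apply: eq_bigr => i iS; rewrite coord_flip; case: eqP => // il; by rewrite -il iS in lS.
Qed.

Lemma card_cube : #|cube n| = (2 ^ n)%N.
Proof. by rewrite card_ffun card_bool card_ord. Qed.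

Lemma sum_walsh S : \sum_b @walsh R n S b = if #|S| == 0%N then 2 ^+ n else 0.
Proof.
case: eqP => [/cards0_eq ->|/eqP]; last first.
  rewrite -lt0n => /card_gt0P [l lS].
  apply: (@sum_flip0 l) => b; by rewrite walsh_flip lS.
  rewrite /walsh; under eq_bigr do rewrite big_set0.
  by rewrite sumr_const card_cube natrX.
Qed.

Definition Pm (eta : R) b : R := \prod_(l < n) (1 + eta * Defs.coord b l).

Lemma Pm_expand eta b : Pm eta b = \sum_(S : {set 'I_n}) eta ^+ #|S| * walsh S b.
Proof.
rewrite /Pm.
transitivity (\prod_(l < n) (eta * Defs.coord b l + 1)).
  by apply: eq_bigr => l _; rewrite addrC.
rewrite bigA_distr; apply: eq_bigr => S _.
rewrite -big_mkcond /= /walsh big_split /= prodr_const; done.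
Qed.

Lemma Pm_ge0 eta b : `|eta| <= 1 -> 0 <= Pm eta b.
Proof.
move=> he; move: he; rewrite ler_norml => /andP [h1 h2].
apply: prodr_ge0 => l _; rewrite /Defs.coord; case: (b l).
  by rewrite mulrN1 subr_ge0.
by rewrite mulr1 -lerBlDl sub0r.
Qed.

Lemma sum_Pm eta : \sum_b Pm eta b = 2 ^+ n.
Proof.
rewrite /Pm (prod_form (fun l c => 1 + eta * (if c then -1 else 1))).
rewrite prodr_const card_ord; congr (_ ^+ _).
rewrite mulrN1 mulr1; lra.
Qed.

End Cube.
Section Cheb.
Variable R : realType.

Lemma cheb0 : @cheb R 0 = 1. Proof. by []. Qed.
Lemma cheb1 : @cheb R 1 = 'X. Proof. by []. Qed.
Lemma chebSS k : @cheb R k.+2 = 2%:P * 'X * cheb k.+1 - cheb k.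
Proof. rewrite /cheb /=; by case: (cheb_pair k). Qed.

Lemma cheb_cos k x : (@cheb R k).[cos x] = cos (k%:R * x).
Proof.
suff : (@cheb R k).[cos x] = cos (k%:R * x) /\ (@cheb R k.+1).[cos x] = cos (k.+1%:R * x) by case.
elim: k => [|k [IH1 IH2]].
  by rewrite cheb0 cheb1 hornerC hornerX mul0r cos0 mul1r.
split => //.
rewrite chebSS !hornerE IH1 IH2.
have -> : (k.+2)%:R * x = (k.+1)%:R * x + x by rewrite -(natr1 k.+1) mulrDl mul1r.
have E : k%:R * x = (k.+1)%:R * x - x by rewrite -(natr1 k) mulrDl mul1r addrK.
rewrite E cosB cosD; lra.
Qed.

Lemma cheb_bound k t : `|t| <= 1 -> `|(@cheb R k).[t]| <= 1.
Proof.
move=> ht; have ht' : t \in `[(-1), 1] by rewrite in_itv /= -ler_norml.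
by rewrite -(acosK ht') cheb_cos cos_max.
Qed.

Lemma cheb_N k t : (@cheb R k).[- t] = (-1) ^+ k * (@cheb R k).[t].
Proof.
suff : (@cheb R k).[- t] = (-1) ^+ k * (@cheb R k).[t] /\
       (@cheb R k.+1).[- t] = (-1) ^+ k.+1 * (@cheb R k.+1).[t] by case.
elim: k => [|k [IH1 IH2]].
  by rewrite cheb0 cheb1 !hornerE; split; ring.
split => //.
rewrite chebSS !hornerE IH1 IH2 !exprS; ring.
Qed.

Lemma size_cheb k : (size (@cheb R k) <= k.+1)%N.
Proof.
suff : (size (@cheb R k) <= k.+1)%N /\ (size (@cheb R k.+1) <= k.+2)%N by case.
elim: k => [|k [IH1 IH2]].
  by rewrite cheb0 cheb1 size_polyC size_polyX oner_neq0.
split => //.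
rewrite chebSS; apply: leq_trans (size_polyD _ _) _; rewrite geq_max; apply/andP; split.
  apply: leq_trans (size_mul_leq _ _) _.
  apply: (@leq_trans ((size (2%:P * 'X : {poly R}) + k.+2).-1)).
    by rewrite -!subn1 leq_sub2r // leq_add2l.
  apply: (@leq_trans ((2 + k.+2).-1)) => //.
  rewrite -!subn1 leq_sub2r // leq_add2r.
  apply: leq_trans (size_mul_leq _ _) _; by rewrite size_polyX size_polyC; case: (_ != 0).
rewrite size_polyN; by apply: (leq_trans IH1); rewrite ltnW.
Qed.

Lemma powB_le (y t : R) i : `|y| <= 1 -> `|t| <= 1 -> `|y ^+ i - t ^+ i| <= i%:R * `|y - t|.
Proof.
move=> hy ht; elim: i => [|i IH]; first by rewrite !expr0 subrr normr0 mul0r.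
have -> : y ^+ i.+1 - t ^+ i.+1 = y * (y ^+ i - t ^+ i) + t ^+ i * (y - t) by rewrite !exprS; ring.
apply: le_trans (ler_normD _ _) _; rewrite !normrM -natr1 mulrDl mul1r.
apply: lerD.
  apply: le_trans (ler_wpM2r (normr_ge0 _) hy) _; by rewrite mul1r.
rewrite normrX; apply: ler_piMl => //; by rewrite exprn_ile1.
Qed.

Definition lipc (p : {poly R}) : R := \sum_(i < size p) `|p`_i| * i%:R.

Lemma lipc_ge0 p : 0 <= lipc p.
Proof. apply: sumr_ge0 => i _; by rewrite mulr_ge0. Qed.

Lemma poly_lip (p : {poly R}) y t : `|y| <= 1 -> `|t| <= 1 ->
  `|p.[y] - p.[t]| <= lipc p * `|y - t|.
Proof.
move=> hy ht; rewrite !horner_coef -sumrB /lipc mulr_suml.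
apply: le_trans (ler_norm_sum _ _ _) _; apply: ler_sum => i _.
rewrite -mulrBr normrM -mulrA; apply: ler_wpM2l => //; exact: powB_le.
Qed.

End Cheb.
Section Nodes.
Variable R : realType.
Variable K : nat.

Definition eta (j : nat) : R := cos (j%:R * pi / K%:R).

Lemma cos_npi j : cos (j%:R * pi) = (-1) ^+ j :> R.
Proof.
elim: j => [|j IH]; first by rewrite mul0r cos0 expr0.
by rewrite -natr1 mulrDl mul1r cosDpi IH exprS mulN1r.
Qed.

Lemma cheb_eta j : (j <= K./2)%N -> (@cheb R K).[eta j] = (-1) ^+ j.
Proof.
move=> hj; rewrite /eta cheb_cos.
case: (posnP K) => [K0|Kp].
  have -> : j = 0%N by move: hj; rewrite K0; lia.
  by rewrite !mul0r mulr0 cos0 expr0.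
rewrite mulrCA divff ?mulr1 ?cos_npi //.
by rewrite pnatr_eq0 -lt0n.
Qed.

Lemma theta_range j : (j <= K./2)%N -> 0 <= j%:R * (pi : R) / K%:R <= pi / 2.
Proof.
move=> hj; case: (posnP K) => [K0|Kp].
  by rewrite K0 invr0 mulr0 lexx divr_ge0 // pi_ge0.
apply/andP; split; first by rewrite divr_ge0 // mulr_ge0 // pi_ge0.
have Kr : (0 : R) < K%:R by rewrite ltr0n.
rewrite ler_pdivrMr //.
have h2 : (2 * j%:R <= K%:R :> R) by rewrite -(natrM R 2 j) ler_nat; lia.
have := @pi_ge0 R; nra.
Qed.

Lemma eta_ge0 j : (j <= K./2)%N -> 0 <= eta j.
Proof.
move=> /theta_range /andP [h1 h2]; apply: cos_ge0_pihalf; rewrite h2 andbT.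
apply: le_trans h1; by rewrite oppr_le0 divr_ge0 // pi_ge0.
Qed.

Lemma eta_gt0 j : odd K -> (j <= K./2)%N -> 0 < eta j.
Proof.
move=> oK hj; have /andP [h1 _] := theta_range j hj.
apply: cos_gt0_pihalf; apply/andP; split.
  apply: lt_le_trans h1; by rewrite oppr_lt0 divr_gt0 // pi_gt0.
have Kp : (0 < K)%N by case: K oK.
have Kr : (0 : R) < K%:R by rewrite ltr0n.
rewrite ltr_pdivrMr //.
have h2 : (2 * j%:R < K%:R :> R) by rewrite -(natrM R 2 j) ltr_nat; move: oK hj; lia.
have := @pi_gt0 R; nra.
Qed.

Lemma eta_le1 j : `|eta j| <= 1.
Proof. exact: cos_max. Qed.

Lemma eta_lt i j : (i < j)%N -> (j <= K./2)%N -> eta j < eta i.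
Proof.
move=> ij hj.
have Kp : (0 < K)%N by move: ij hj; lia.
have Kr : (0 : R) < K%:R by rewrite ltr0n.
have hi : (i <= K./2)%N by lia.
have r1 : forall l : nat, (l <= K./2)%N -> l%:R * (pi : R) / K%:R \in `[0, pi].
  move=> l hl; have /andP [a b] := theta_range l hl.
  rewrite in_itv /= a /=; apply: le_trans b _.
  by rewrite ler_pdivrMr // ler_peMr ?pi_ge0 // ler1n.
rewrite /eta ltr_cos ?r1 //.
by rewrite ltr_pM2r ?invr_gt0 // ltr_pM2r ?pi_gt0 // ltr_nat.
Qed.

End Nodes.

Lemma coef_prod_sign (R : realType) (I : eqType) (s : seq I) (F : I -> R) :
  (forall i, i \in s -> 0 <= F i) ->
  forall r, 0 <= (-1) ^+ (size s + r) * (\prod_(i <- s) ('X - (F i)%:P))`_r.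
Proof.
elim: s => [|a s IH] hF r.
  rewrite big_nil coef1 /=; case: r => [|r] /=; first by rewrite mul1r.
  by rewrite mulr0.
have hs : forall i, i \in s -> 0 <= F i by move=> i hi; apply: hF; rewrite inE hi orbT.
have ha : 0 <= F a by apply: hF; rewrite inE eqxx.
rewrite big_cons mulrBl coefB coefXM coefCM /=.
set P := \prod_(i <- s) _.
case: r => [|r] /=.
  have := IH hs 0%N; rewrite addn0 addn0 exprS => h; rewrite -/P in h.
  nra.
have h1 := IH hs r; have h2 := IH hs r.+1; rewrite -/P in h1 h2.
have -> : ((size s).+1 + r.+1 = (size s + r).+2)%N by lia.
rewrite addnS exprS in h2.
rewrite !exprS; nra.
Qed.

Section Lag.
Variable R : realType.
Variable K : nat.
Local Notation m := K./2.
Local Notation N := m.+1.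

Definition xn (j : nat) : R := if (j <= m)%N then eta R K j ^+ 2 else - (1 + j%:R).

Lemma xn_ge0 j : (j <= m)%N -> 0 <= xn j.
Proof. by move=> hj; rewrite /xn hj sqr_ge0. Qed.

Lemma xn_lt i j : (i < j)%N -> (j <= m)%N -> xn j < xn i.
Proof.
move=> ij hj; rewrite /xn hj ifT; last by lia.
have h0 := eta_ge0 R K j hj; have h1 := eta_lt R K i j ij hj.
rewrite -subr_gt0 subr_sqr; apply: mulr_gt0; lra.
Qed.


Lemma xn_decr i j : (i < j)%N -> xn j < xn i.
Proof.
move=> ij; case: (leqP j m) => hj; first exact: xn_lt.
have -> : xn j = - (1 + j%:R) by rewrite /xn ifF //; apply/negbTE; rewrite -ltnNge.
case: (leqP i m) => hi.
  apply: (lt_le_trans _ (xn_ge0 i hi)); rewrite oppr_lt0; apply: ltr_pwDl => //.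
have -> : xn i = - (1 + i%:R) by rewrite /xn ifF //; apply/negbTE; rewrite -ltnNge.
by rewrite ltrN2 ltrD2l ltr_nat.
Qed.

Lemma xn_inj : injective xn.
Proof.
move=> i j E; case: (ltngtP i j) => // h.
  by have := xn_decr _ _ h; rewrite E ltxx.
by have := xn_decr _ _ h; rewrite E ltxx.
Qed.

Definition Lq (j : 'I_N) : {poly R} := tnth (N.-lagrange xn) j.
Definition beta (r : nat) (j : 'I_N) : R := (Lq j)`_r.

Lemma beta_moment r s : (s <= m)%N ->
  \sum_(j < N) beta r j * xn j ^+ s = (r == s)%:R.
Proof.
move=> hs.
have hsz : (size ('X^s : {poly R}) <= N)%N by rewrite size_polyXn.
have E := lagrange_gen (ltn0Sn m) xn_inj hsz.
have := congr1 (fun p : {poly R} => p`_r) E.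
rewrite /= coefXn coef_sum => ->; apply: eq_bigr => j _.
by rewrite coefCM hornerXn mulrC.
Qed.

Lemma sign_pow_prod (j : 'I_N) (f : 'I_N -> R) :
  (forall i : 'I_N, (i < j)%N -> f i < 0) -> (forall i : 'I_N, (j < i)%N -> 0 < f i) ->
  0 < (-1) ^+ j * \prod_(i < N | i != j) f i.
Proof.
move=> hl hg.
have E : \prod_(i < N | i != j) f i =
   \prod_(i < N | i != j) ((if (i < j)%N then -1 else 1) * `|f i|).
  apply: eq_bigr => i ij; case: ltnP => h; first by rewrite ltr0_norm ?hl // mulN1r opprK.
  rewrite mul1r gtr0_norm //; apply: hg; rewrite ltn_neqAle h andbT eq_sym.
  by rewrite -(inj_eq val_inj) in ij.
have E2 : \prod_(i < N | i != j) (if (i < j)%N then -1 else 1) = (-1) ^+ j :> R.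
  transitivity (\prod_(i < N | true && (i < j)%N) (-1 : R)).
    rewrite big_mkcond [in RHS]big_mkcond; apply: eq_bigr => i _ /=.
    case: (ltnP i j) => h; first by rewrite ifT //; apply/negP => /eqP E'; rewrite E' ltnn in h.
    by case: (_ != _).
  rewrite (big_ord_narrow_cond (ltnW (ltn_ord j))) prodr_const card_ord //.
rewrite E big_split /= E2 mulrA -exprD -signr_odd oddD addbb expr0 mul1r.
apply: prodr_gt0 => i ij; rewrite normr_gt0; apply/negP => /eqP f0.
case: (ltngtP i j) => h.
- by have := hl _ h; rewrite f0 ltxx.
- by have := hg _ h; rewrite f0 ltxx.
- by move: ij; rewrite (val_inj h) eqxx.
Qed.

Lemma beta_sign r (j : 'I_N) : 0 <= (-1) ^+ (m + r) * (-1) ^+ j * beta r j.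
Proof.
rewrite /beta /Lq lagrangeE ?ltn0Sn //; last exact: xn_inj.
rewrite /= coefCM.
set q := \prod_(i < N | i != j) _.
have hD : 0 < (-1) ^+ j * q.[xn j].
  rewrite /q horner_prod; under eq_bigr do rewrite hornerXsubC.
  apply: sign_pow_prod => i h; rewrite ?subr_lt0 ?subr_gt0; apply: xn_decr => //.
have hq : 0 <= (-1) ^+ (m + r) * q`_r.
  rewrite /q -big_filter.
  have hsz : size [seq i <- index_enum 'I_N | i != j] = m.
    have hc : #|predC1 j| = m by rewrite cardC1 card_ord.
    apply: (etrans _ hc); by rewrite cardE /enum_mem size_filter.
  rewrite -{1}hsz; apply: coef_prod_sign => i _; apply: xn_ge0; exact: (ltnSE (ltn_ord i)).
have -> : (-1) ^+ (m + r) * (-1) ^+ j * ((q.[xn j])^-1 * q`_r) =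
   ((-1) ^+ (m + r) * q`_r) * ((-1) ^+ j * q.[xn j])^-1.
  rewrite invfM invr_sign; ring.
apply: mulr_ge0 => //; by rewrite invr_ge0 ltW.
Qed.

End Lag.

Section Cert.
Variable R : realType.
Variables K d : nat.
Hypothesis hdK : (d <= K)%N.
Hypothesis hpar : ~~ odd (K - d).
Local Notation m := K./2.
Local Notation N := m.+1.
Local Notation r := d./2.
Local Notation pp := (odd K : nat).

Definition nodeK (js : 'I_N * bool) : R := (if js.2 then -1 else 1) * eta R K js.1.
Definition massK (js : 'I_N * bool) : R :=
  (if js.2 then (-1) ^+ pp else 1) * beta R K r js.1 / (2 * eta R K js.1 ^+ pp).
Definition sigK : R := (-1) ^+ (m + r).

Lemma jle (j : 'I_N) : (j <= m)%N.
Proof. exact: (ltnSE (ltn_ord j)). Qed.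

Lemma etapp_gt0 (j : 'I_N) : 0 < eta R K j ^+ pp.
Proof.
case oK : (odd K) => /=; last by rewrite expr0.
by rewrite expr1; apply: eta_gt0 => //; exact: jle.
Qed.

Lemma term_eq (j : 'I_N) (b : bool) (h : nat) :
  massK (j, true) * nodeK (j, true) ^+ (b + h.*2) + massK (j, false) * nodeK (j, false) ^+ (b + h.*2)
  = if odd K (+) b then 0 else beta R K r j * xn R K j ^+ h.
Proof.
rewrite /massK /nodeK /= /xn jle.
have hp := etapp_gt0 j.
set et := eta R K j; set be := beta R K r j.
rewrite !mulN1r !mul1r -!mul2n !(exprD _ b) !exprM sqrrN.
set z := et ^+ 2 ^+ h.
case oK : (odd K) hp => /= hp; case: b => /=; rewrite /et ?expr1 ?expr0 in hp *.
- field; by rewrite lt0r_neq0.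
- field; by rewrite lt0r_neq0.
- by field.
- by field.
Qed.

Lemma oddd : odd d = odd K.
Proof. move: hpar hdK; lia. Qed.

Lemma massK_moment e : (e <= K.+1)%N ->
  \sum_(js : 'I_N * bool) massK js * nodeK js ^+ e = (e == d)%:R.
Proof.
move=> he.
rewrite -(pair_bigA _ (fun j b => massK (j, b) * nodeK (j, b) ^+ e)) /=.
have He : e = (odd e + (e./2).*2)%N by rewrite odd_double_half.
have Ht : forall j : 'I_N, massK (j, true) * nodeK (j, true) ^+ e + massK (j, false) * nodeK (j, false) ^+ e
  = if odd K (+) odd e then 0 else beta R K r j * xn R K j ^+ e./2.
  by move=> j; rewrite [in LHS]He term_eq.
under eq_bigr => j _ do rewrite big_bool /= Ht.
case hodd : (odd K (+) odd e).
  rewrite big1 // ; move: hodd; rewrite -oddd; case: eqP => // ->; by rewrite addbb.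
rewrite beta_moment; last by move: hodd he; lia.
congr (_ %:R); apply/eqP/eqP; move: hodd; rewrite -oddd; lia.
Qed.

Lemma massK_sign js : 0 <= sigK * massK js * (@cheb R K).[nodeK js].
Proof.
case: js => j s; rewrite /sigK /massK /nodeK /=.
have hb := beta_sign R K r j; have hp := etapp_gt0 j.
set et := eta R K j; set be := beta R K r j.
have hT : (@cheb R K).[et] = (-1) ^+ j by apply: cheb_eta; exact: jle.
have Hs : (-1) ^+ pp * (-1) ^+ K = 1 :> R.
  by rewrite -exprD -signr_odd oddD; case: (odd K).
case: s.
- rewrite mulN1r cheb_N hT.
  have -> : (-1) ^+ (m + r) * ((-1) ^+ pp * be / (2 * et ^+ pp)) * ((-1) ^+ K * (-1) ^+ j)
    = ((-1) ^+ pp * (-1) ^+ K) * ((-1) ^+ (m + r) * (-1) ^+ j * be) / (2 * et ^+ pp) by ring.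
  rewrite Hs mul1r; apply: divr_ge0 => //; apply: mulr_ge0 => //; exact: ltW.
- rewrite !mul1r hT.
  have -> : (-1) ^+ (m + r) * (be / (2 * et ^+ pp)) * (-1) ^+ j
    = ((-1) ^+ (m + r) * (-1) ^+ j * be) / (2 * et ^+ pp) by ring.
  apply: divr_ge0 => //; apply: mulr_ge0 => //; exact: ltW.
Qed.

Lemma nodeK_le1 js : `|nodeK js| <= 1.
Proof. rewrite /nodeK normrM; case: js.2; by rewrite ?normrN normr1 mul1r eta_le1. Qed.

Lemma cheb_nodeK js : `|(@cheb R K).[nodeK js]| = 1.
Proof.
case: js => j s; rewrite /nodeK /=.
case: s.
  by rewrite mulN1r cheb_N cheb_eta ?jle // normrM !normr_sign mulr1.
by rewrite mul1r cheb_eta ?jle // normr_sign.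
Qed.

Lemma sum_mass_cheb : \sum_js massK js * (@cheb R K).[nodeK js] = ccoef K d.
Proof.
under eq_bigr => js _ do rewrite (horner_coef_wide _ (size_cheb R K)) mulr_sumr.
rewrite exchange_big /=.
have Hi : forall i : 'I_K.+1, \sum_js massK js * ((@cheb R K)`_i * nodeK js ^+ i)
   = (@cheb R K)`_i * ((i : nat) == d)%:R.
  move=> i; rewrite -(massK_moment _ (ltnW (ltn_ord i))) mulr_sumr.
  apply: eq_bigr => js _; ring.
under eq_bigr do rewrite Hi.
rewrite (bigD1 (Ordinal (hdK : (d < K.+1)%N))) //= eqxx mulr1 big1 ?addr0 //.
move=> i hi; have /negbTE -> : (i : nat) != d.
  by move: hi; apply: contra => /eqP hh; apply/eqP/val_inj.
by rewrite mulr0.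
Qed.

End Cert.

Lemma cert (R : realType) (k d : nat) : (d <= k)%N ->
  exists (I : finType) (node mass : I -> R) (T : {poly R}),
  [/\ forall i, `|node i| <= 1,
      forall e, (e <= k)%N -> \sum_i mass i * node i ^+ e = (e == d)%:R,
      (size T <= k.+1)%N,
      forall t, `|t| <= 1 -> `|T.[t]| <= 1 &
      \sum_i `|mass i| = `|ctilde k d| /\
      \sum_i mass i * T.[node i] = `|ctilde k d| ].
Proof.
move=> hdk.
pose K := if odd (k - d) then k.-1 else k.
have hdK : (d <= K)%N by rewrite /K; case: ifP => h //; move: h hdk; lia.
have hpar : ~~ odd (K - d) by rewrite /K; case: ifP => h //; [move: h hdk; lia | rewrite h].
have hkK : (k <= K.+1)%N by rewrite /K; case: ifP => h; lia.
have hKk : (K <= k)%N by rewrite /K; case: ifP => h; lia.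
have hct : ctilde k d = @ccoef R K d by rewrite /ctilde /K; case: ifP.
set sg := sigK R K d.
have hsg : `|sg| = 1 by rewrite /sg /sigK normr_sign.
have Hm : forall js, `|massK R K d js| = sg * massK R K d js * (@cheb R K).[nodeK R K js].
  move=> js; rewrite -[RHS]ger0_norm; last exact: massK_sign.
  by rewrite !normrM hsg cheb_nodeK mul1r mulr1.
have HS := sum_mass_cheb R K d hdK hpar.
have Habs : \sum_js `|massK R K d js| = sg * ccoef K d.
  under eq_bigr do rewrite Hm -mulrA.
  by rewrite -mulr_sumr HS.
have Hc : `|ctilde k d| = \sum_js `|massK R K d js|.
  have -> : `|ctilde k d| = `|sg * ccoef K d| by rewrite normrM hsg mul1r hct.
  rewrite -Habs ger0_norm //; by apply: sumr_ge0 => js _.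
exists ('I_(K./2).+1 * bool)%type, (nodeK R K), (massK R K d), (sg *: cheb K).
split.
- exact: nodeK_le1.
- move=> e he; apply: massK_moment => //; exact: leq_trans he hkK.
- apply: leq_trans (size_scale_leq _ _) _; apply: leq_trans (size_cheb R K) _; by rewrite ltnS.
- move=> t ht; rewrite hornerZ normrM hsg mul1r; exact: cheb_bound.
split; first by rewrite Hc.
  rewrite Hc Habs -HS mulr_sumr; apply: eq_bigr => js _; rewrite hornerZ; ring.
Qed.

Section Main.
Variable R : realType.
Variable n : nat.
Implicit Types (b : cube n).
Local Notation Pm := (Pm R n).

Definition ybar b : R := (\sum_(l < n) Defs.coord b l) / n%:R.

Lemma coord_norm b l : `|@Defs.coord R n b l| = 1.
Proof. by rewrite /Defs.coord; case: (b l); rewrite ?normrN normr1. Qed.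

Lemma ybar_le1 b : `|ybar b| <= 1.
Proof.
rewrite /ybar; case: (posnP n) => [n0|np].
  have -> : (n%:R : R) = 0 by rewrite n0.
  by rewrite invr0 mulr0 normr0.
have nr : (0 : R) < n%:R by rewrite ltr0n.
rewrite normrM normfV (gtr0_norm nr) ler_pdivrMr // mul1r.
apply: le_trans (ler_norm_sum _ _ _) _.
under eq_bigr do rewrite coord_norm.
by rewrite sumr_const card_ord.
Qed.

Lemma walsh_pow0 (S : {set 'I_n}) e : (e < #|S|)%N ->
  \sum_b walsh S b * (\sum_(l < n) @Defs.coord R n b l) ^+ e = 0.
Proof.
move=> he.
have E : forall b : cube n, (\sum_(l < n) @Defs.coord R n b l) ^+ e =
    \sum_(f : {ffun 'I_e -> 'I_n}) \prod_(t < e) Defs.coord b (f t).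
  move=> b; transitivity (\prod_(t < e) \sum_(l < n) @Defs.coord R n b l).
    by rewrite prodr_const card_ord.
  exact: bigA_distr_bigA.
under eq_bigr do rewrite E mulr_sumr.
rewrite exchange_big big1 // => f _.
have : ~~ (S \subset codom f).
  apply/negP => hsub; have := subset_leq_card hsub.
  have := card_size (codom f); rewrite size_codom card_ord => h1 h2.
  by move: (leq_trans h2 h1); rewrite leqNgt he.
case/subsetPn => l lS lf.
apply: (@sum_flip0 R n l) => b; rewrite walsh_flip lS mulNr; congr (- (_ * _)).
apply: eq_bigr => t _; rewrite coord_flip; case: eqP => // ftl.
by move: lf; rewrite -ftl codom_f.
Qed.

Lemma orth (a : {set 'I_n} -> R) k (T : {poly R}) :
  (forall S : {set 'I_n}, (#|S| <= k)%N -> a S = 0) -> (size T <= k.+1)%N ->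
  \sum_b (\sum_(S : {set 'I_n}) a S * walsh S b) * T.[ybar b] = 0.
Proof.
move=> ha hT.
under eq_bigr do rewrite mulr_suml.
rewrite exchange_big big1 // => S _.
case: (leqP #|S| k) => hS.
  by rewrite big1 // => b _; rewrite ha // !mul0r.
under eq_bigr do rewrite (horner_coef_wide _ hT) mulr_sumr.
rewrite exchange_big big1 // => e _.
transitivity (a S * T`_e * (n%:R^-1) ^+ e *
   \sum_b walsh S b * (\sum_(l < n) @Defs.coord R n b l) ^+ e).
  rewrite mulr_sumr; apply: eq_bigr => b _; rewrite /ybar exprMn; ring.
rewrite walsh_pow0 ?mulr0 //; apply: leq_trans hS; exact: ltn_ord.
Qed.


Definition cv (c : bool) : R := if c then -1 else 1.

Lemma Pm_mom2 (eta : R) (l l' : 'I_n) :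
  \sum_b Pm eta b * ((Defs.coord b l - eta) * (Defs.coord b l' - eta))
  = if l == l' then 2 ^+ n * (1 - eta ^+ 2) else 0.
Proof.
pose G := fun (i : 'I_n) (c : bool) =>
  (1 + eta * cv c) * ((if i == l then cv c - eta else 1) * (if i == l' then cv c - eta else 1)).
have E : forall b : cube n, Pm eta b * ((Defs.coord b l - eta) * (Defs.coord b l' - eta))
    = \prod_(i < n) G i (b i).
  move=> b; rewrite /G big_split /= big_split /=.
  rewrite -!big_mkcond /= !big_pred1_eq.
  by [].
rewrite (eq_bigr _ (fun b _ => E b)) prod_form (bigD1 l) //=.
have Hc : #|predC1 l| = n.-1 by rewrite cardC1 card_ord.
have hn : n = (n.-1).+1 by have := ltn_ord l; lia.
case: (eqVneq l l') => [E'|nl].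
  subst l'.
  rewrite (eq_bigr (fun _ => 2)); last first.
    by move=> i /negbTE il; rewrite /G /cv il; ring.
  rewrite prodr_const Hc /G /cv eqxx.
  rewrite [in RHS]hn exprS; ring.
rewrite /G /cv eqxx (negbTE nl).
have -> : (1 + eta * -1) * ((-1 - eta) * 1) + (1 + eta * 1) * ((1 - eta) * 1) = 0 by ring.
by rewrite mul0r.
Qed.


Lemma Pm_var (eta : R) : `|eta| <= 1 ->
  \sum_b Pm eta b * (ybar b - eta) ^+ 2 <= 2 ^+ n * (4 / n.+1%:R).
Proof.
move=> he.
have hP := fun b => Pm_ge0 R n eta b he.
case: (posnP n) => [n0|np].
  have -> : 4 / n.+1%:R = 4 :> R by rewrite n0 divr1.
  apply: (@le_trans _ _ (\sum_b Pm eta b * 4)).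
    apply: ler_sum => b _; apply: ler_wpM2l => //.
    have := ybar_le1 b; move: he; rewrite !ler_norml => /andP [h1 h2] /andP [h3 h4].
    nra.
  by rewrite -mulr_suml sum_Pm.
have nr : (0 : R) < n%:R by rewrite ltr0n.
have Ey : forall b, ybar b - eta = n%:R^-1 * \sum_(l < n) (Defs.coord b l - eta).
  move=> b; rewrite sumrB sumr_const card_ord /ybar mulrBr mulrC; congr (_ - _).
  by rewrite -[eta *+ n]mulr_natr mulrCA mulVf ?mulr1 // lt0r_neq0.
have E2 : \sum_b Pm eta b * (ybar b - eta) ^+ 2 = n%:R^-1 * (2 ^+ n * (1 - eta ^+ 2)).
  have step : forall b, Pm eta b * (ybar b - eta) ^+ 2 = n%:R^-1 ^+ 2 *
      \sum_(l < n) \sum_(l' < n) Pm eta b * ((Defs.coord b l - eta) * (Defs.coord b l' - eta)).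
    move=> b; rewrite Ey exprMn mulrCA; congr (_ * _).
    rewrite expr2 mulr_suml mulr_sumr; apply: eq_bigr => l _.
    rewrite mulr_sumr mulr_sumr; apply: eq_bigr => l' _; ring.
  rewrite (eq_bigr _ (fun b _ => step b)) -mulr_sumr exchange_big /=.
  under eq_bigr do rewrite exchange_big /=.
  under eq_bigr do (under eq_bigr do rewrite Pm_mom2).
  have Hs : forall l : 'I_n, \sum_(l' < n) (if l == l' then 2 ^+ n * (1 - eta ^+ 2) else 0)
     = 2 ^+ n * (1 - eta ^+ 2) :> R.
    move=> l; rewrite (bigD1 l) //= eqxx big1 ?addr0 // => i /negbTE.
    by rewrite eq_sym => ->.
  under eq_bigr do rewrite Hs.
  rewrite sumr_const card_ord.
  set c := 2 ^+ n * (1 - eta ^+ 2); rewrite -[c *+ n]mulr_natr.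
  by field; exact: lt0r_neq0.
rewrite E2.
have h1 : 0 <= 1 - eta ^+ 2.
  move: he; rewrite ler_norml => /andP [ha hb]; nra.
have h2 : 1 - eta ^+ 2 <= 1 by have := sqr_ge0 eta; lra.
have h3 : n%:R^-1 <= 4 / n.+1%:R :> R.
  have hi : n%:R^-1 <= (1 : R) by rewrite invf_le1 // ler1n.
  rewrite ler_pdivlMr ?ltr0n // -natr1 mulrDr mulVf ?mulr1; [lra | exact: lt0r_neq0].
rewrite mulrCA; apply: ler_wpM2l; first exact: exprn_ge0.
apply: le_trans (ler_wpM2l _ h2) _; first by rewrite invr_ge0 ltW.
by rewrite mulr1.
Qed.

Definition rn : R := Num.sqrt (4 / n.+1%:R).

Lemma rn_gt0 : 0 < rn.
Proof. by rewrite sqrtr_gt0 divr_gt0 ?ltr0n. Qed.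

Lemma Pm_abs (eta : R) : `|eta| <= 1 ->
  \sum_b Pm eta b * `|ybar b - eta| <= 2 ^+ n * rn.
Proof.
move=> he; have hP := fun b => Pm_ge0 R n eta b he.
have hr := rn_gt0; have hr2 : rn ^+ 2 = 4 / n.+1%:R by rewrite sqr_sqrtr // divr_ge0.
have pt : forall u : R, `|u| <= (u ^+ 2 / rn + rn) / 2.
  move=> u; rewrite ler_pdivlMr // -[u ^+ 2](real_normK (num_real u)).
  rewrite -subr_ge0.
  have -> : (`|u| ^+ 2 / rn + rn) - `|u| * 2 = (`|u| - rn) ^+ 2 / rn.
    by field; exact: lt0r_neq0.
  by apply: divr_ge0; [exact: sqr_ge0 | exact: ltW].
apply: (@le_trans _ _ (\sum_b Pm eta b * (((ybar b - eta) ^+ 2 / rn + rn) / 2))).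
  apply: ler_sum => b _; exact: ler_wpM2l.
have -> : \sum_b Pm eta b * (((ybar b - eta) ^+ 2 / rn + rn) / 2) =
   ((\sum_b Pm eta b * (ybar b - eta) ^+ 2) / rn + rn * \sum_b Pm eta b) / 2.
  rewrite mulr_suml mulr_sumr -big_split mulr_suml; apply: eq_bigr => b _ /=; field.
  exact: lt0r_neq0.
rewrite sum_Pm.
have hv := Pm_var eta he.
rewrite ler_pdivrMr //.
have : (\sum_b Pm eta b * (ybar b - eta) ^+ 2) / rn <= 2 ^+ n * rn.
  rewrite ler_pdivrMr // -mulrA -expr2 hr2 //.
have : (0 : R) <= 2 ^+ n by exact: exprn_ge0.
move=> ? ?; nra.
Qed.

End Main.

Section Final.
Variable R : realType.
Variables (n k d : nat).
Variable I : finType.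
Variables (node mass : I -> R).
Hypothesis hnode : forall i, `|node i| <= 1.
Hypothesis hmom : forall e, (e <= k)%N -> \sum_i mass i * node i ^+ e = (e == d)%:R.
Local Notation Pm := (Pm R n).

Definition Ff (b : cube n) : R := \sum_i mass i * Pm (node i) b.

Lemma Ff_expand (b : cube n) : Ff b = \sum_(S : {set 'I_n}) (\sum_i mass i * node i ^+ #|S|) * walsh S b.
Proof.
rewrite /Ff; under eq_bigr do rewrite Pm_expand mulr_sumr.
rewrite exchange_big; apply: eq_bigr => S _; rewrite mulr_suml; apply: eq_bigr => i _; ring.
Qed.

Lemma fsym_expand (b : cube n) : @Defs.fsym R n d b = \sum_(S : {set 'I_n}) (#|S| == d)%:R * walsh S b.
Proof.
rewrite /Defs.fsym big_mkcond; apply: eq_bigr => S _; case: eqP => _; by rewrite ?mul1r ?mul0r.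
Qed.

Definition acoef (S : {set 'I_n}) : R := (#|S| == d)%:R - \sum_i mass i * node i ^+ #|S|.

Lemma acoef0 (S : {set 'I_n}) : (#|S| <= k)%N -> acoef S = 0.
Proof. move=> h; by rewrite /acoef hmom // subrr. Qed.

Lemma g0_in : @Pgt R n k (fun b => @Defs.fsym R n d b - Ff b).
Proof.
exists acoef; split; first exact: acoef0.
move=> b; rewrite fsym_expand Ff_expand -sumrB; apply: eq_bigr => S _.
by rewrite /acoef mulrBl.
Qed.

Lemma L1_Ff : L1norm (fun b => @Defs.fsym R n d b - (@Defs.fsym R n d b - Ff b)) <= \sum_i `|mass i|.
Proof.
rewrite /L1norm.
have h2 : (0 : R) < 2 ^+ n by apply: exprn_gt0.
rewrite ler_pdivrMl //.
apply: (@le_trans _ _ (\sum_b \sum_i `|mass i| * Pm (node i) b)).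
  apply: ler_sum => b _; rewrite opprB addrC subrK /Ff.
  apply: le_trans (ler_norm_sum _ _ _) _; apply: ler_sum => i _.
  by rewrite normrM (ger0_norm (Pm_ge0 _ _ _ _ (hnode i))).
rewrite exchange_big /= mulr_sumr; apply: ler_sum => i _.
by rewrite -mulr_sumr sum_Pm mulrC.
Qed.


Variable T : {poly R}.
Hypothesis hsz : (size T <= k.+1)%N.
Hypothesis hT : forall t, `|t| <= 1 -> `|T.[t]| <= 1.

Lemma Ebound i : `|\sum_(b : cube n) Pm (node i) b * T.[ybar R n b] - 2 ^+ n * T.[node i]|
   <= lipc R T * (2 ^+ n * rn R n).
Proof.
have hP := fun b => Pm_ge0 R n (node i) b (hnode i).
rewrite -(sum_Pm R n (node i)) mulr_suml -sumrB.
under eq_bigr do rewrite -mulrBr.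
apply: le_trans (ler_norm_sum _ _ _) _.
apply: (@le_trans _ _ (\sum_(b : cube n) lipc R T * (Pm (node i) b * `|ybar R n b - node i|))).
  apply: ler_sum => b _; rewrite normrM ger0_norm // mulrCA.
  apply: ler_wpM2l => //; apply: poly_lip => //; exact: ybar_le1.
rewrite -mulr_sumr; apply: ler_wpM2l; first exact: lipc_ge0.
rewrite sum_Pm; exact: (Pm_abs R n (node i) (hnode i)).
Qed.

Lemma lower (g : cube n -> R) : @Pgt R n k g ->
  (\sum_i mass i * T.[node i]) - (\sum_i `|mass i|) * lipc R T * rn R n
    <= L1norm (fun b => @Defs.fsym R n d b - g b).
Proof.
case=> a [ha hg].
pose a' := fun S : {set 'I_n} => acoef S - a S.
have Hsplit : forall b : cube n, @Defs.fsym R n d b - g b = Ff b + \sum_(S : {set 'I_n}) a' S * walsh S b.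
  move=> b; rewrite fsym_expand hg Ff_expand -!sumrB -big_split /=.
  apply: eq_bigr => S _; rewrite /a' /acoef; ring.
have Horth : \sum_(b : cube n) (\sum_(S : {set 'I_n}) a' S * walsh S b) * T.[ybar R n b] = 0.
  apply: (orth R n a' k T _ hsz) => S hS; by rewrite /a' acoef0 // ha // subrr.
have h2 : (0 : R) < 2 ^+ n by apply: exprn_gt0.
rewrite /L1norm ler_pdivlMl //.
apply: (@le_trans _ _ (\sum_(b : cube n) (@Defs.fsym R n d b - g b) * T.[ybar R n b])); last first.
  apply: ler_sum => b _.
  have h1 := ler_norm ((@Defs.fsym R n d b - g b) * T.[ybar R n b]).
  rewrite normrM in h1.
  have h3 := ler_wpM2l (normr_ge0 (@Defs.fsym R n d b - g b)) (hT _ (ybar_le1 R n b)).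
  rewrite mulr1 in h3; exact: (le_trans h1 h3).
have -> : \sum_(b : cube n) (@Defs.fsym R n d b - g b) * T.[ybar R n b] =
  \sum_(b : cube n) (Ff b * T.[ybar R n b] +
      (\sum_(S : {set 'I_n}) a' S * walsh S b) * T.[ybar R n b]).
  by apply: eq_bigr => b _; rewrite Hsplit mulrDl.
rewrite big_split /= Horth addr0.
have -> : \sum_(b : cube n) Ff b * T.[ybar R n b] =
   \sum_i mass i * \sum_(b : cube n) Pm (node i) b * T.[ybar R n b].
  rewrite /Ff; under eq_bigr do rewrite mulr_suml.
  rewrite exchange_big; apply: eq_bigr => i _; rewrite mulr_sumr; apply: eq_bigr => b _; ring.
have Hi : forall i, 2 ^+ n * (mass i * T.[node i]) - `|mass i| * lipc R T * (2 ^+ n * rn R n)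
   <= mass i * \sum_(b : cube n) Pm (node i) b * T.[ybar R n b].
  move=> i; have := Ebound i.
  set E := \sum_(b : cube n) _.
  move=> hE.
  have h1 := lerNnormlW (lexx `|mass i * (E - 2 ^+ n * T.[node i])|).
  rewrite normrM in h1.
  have h3 : `|mass i| * `|E - 2 ^+ n * T.[node i]| <= `|mass i| * (lipc R T * (2 ^+ n * rn R n)).
    exact: ler_wpM2l.
  nra.
apply: le_trans (ler_sum _ (fun i _ => Hi i)).
rewrite sumrB -mulr_sumr -!mulr_suml.
by rewrite le_eqVlt; apply/orP; left; apply/eqP; ring.
Qed.

End Final.

Theorem corollary1p5 (R : realType) (k d : nat) :
  (d <= k)%N ->
  exists eps : nat -> R,
    (forall n : nat, (k <= n)%N ->
       0 < eps n /\
       `|@ctilde R k d| - eps n <= @distP R n k d /\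
       @distP R n k d <= `|@ctilde R k d|) /\
    eps @ \oo --> (0 : R).
Proof.
move=> hdk.
have HC := cert R k d hdk.
case: HC => I HC. case: HC => node HC. case: HC => mass HC. case: HC => T HC.
case: HC => hnode hmom hsz hT [habs hsum].
set c := `|ctilde k d|.
set L := lipc R T.
have hc : 0 <= c by exact: normr_ge0.
have hL : 0 <= L by exact: lipc_ge0.
exists (fun n => c * L * rn R n + harmonic n).
split.
  move=> n _.
  have hr := rn_gt0 R n.
  have hh := @harmonic_gt0 R n.
  split; first by apply: ltr_pwDr => //; rewrite !mulr_ge0 // ltW.
  set A := [set L1norm (fun b => @Defs.fsym R n d b - g b) | g in @Pgt R n k].
  have Ane : A !=set0.
    by exists (L1norm (fun b => @Defs.fsym R n d b - (@Defs.fsym R n d b - Ff R n I node mass b)));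
      exists (fun b => @Defs.fsym R n d b - Ff R n I node mass b) => //; exact: (g0_in R n k d I node mass hmom).
  have Alb : lbound A (c - c * L * rn R n).
    move=> y [g hg <-].
    have := lower R n k d I node mass hnode hmom T hsz hT g hg.
    by rewrite hsum habs.
  split.
    apply: lb_le_inf => // y Ay; apply: le_trans (Alb _ Ay).
    by rewrite lerB // lerDl ltW.
  have hlb : has_lbound A.
    exists 0 => y [g _ <-]; rewrite /L1norm; apply: mulr_ge0.
      by rewrite invr_ge0 exprn_ge0.
    by apply: sumr_ge0 => b _.
  apply: le_trans (ge_inf hlb _) _.
    exists (fun b => @Defs.fsym R n d b - Ff R n I node mass b) => //; exact: (g0_in R n k d I node mass hmom).
  rewrite /c -habs; exact: (L1_Ff R n d I node mass hnode).
have h1 : (fun n => 4 * harmonic n) @ \oo --> (4 * 0 : R).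
  by apply: cvgMl_tmp; exact: cvg_harmonic.
have h2 : (fun n => Num.sqrt (4 * harmonic n)) @ \oo --> (Num.sqrt (4 * 0) : R).
  exact: (continuous_cvg _ (@sqrt_continuous R _) h1).
have h3 : (fun n => c * L * Num.sqrt (4 * harmonic n) + harmonic n) @ \oo -->
   (c * L * Num.sqrt (4 * 0) + 0 : R).
  apply: cvgD; last exact: cvg_harmonic.
  by apply: cvgMl_tmp.
rewrite mulr0 sqrtr0 mulr0 addr0 in h3.
exact: h3.
Qed.
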